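(* Let $G$ be a graph and let $t=\varphi_r(G)$. If every induced subgraph of $G$ that is a minimal b-$t$-atom is feasible in $G$, then $\varphi(G)=\varphi_r(G)$.
   Context: A proper $k$-coloring of $G$ is a surjective map $c:V(G)\to\{1,\ldots,k\}$ with $c(u)\ne c(v)$ for every edge $uv$. In a proper $k$-coloring, a vertex of color $i$ is a b-vertex if it has a neighbor of every color $j\ne i$. A b-$k$-coloring is a proper $k$-coloring in which every color class contains a b-vertex; $\varphi(G)$ is the largest $k$ such that $G$ has a b-$k$-coloring, and $\varphi_r(G)=\max\{\varphi(H): H\text{ an induced subgraph of }G\}$. A b-$t$-atom is a graph $A$ whose vertex set can be partitioned into $t$ sets $D_1,\ldots,D_t$, each $D_i$ containing a special vertex $c_i$, such that each $D_i$ is independent with $|D_i|\le t$ and, for all $i\ne j$, $c_i$ has a neighbor in $D_j$; it is minimal if no proper induced subgraph of it is a b-$t$-atom. For an induced subgraph $A$ of $G$, $N(A)$ is the set of vertices outside $V(A)$ with a neighbor in $V(A)$. An induced b-$t$-atom $A$ of $G$ is feasible in $G$ if some b-$t$-coloring of $A$ extends to a proper coloring of $V(A)\cup N(A)$ using only colors $\{1,\ldots,t\}$. *)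

(* Defs.v *)
(* A graph is a symmetric irreflexive relation e on a finType T.
   Induced subgraphs are represented by vertex subsets S : {set T}.
   Colours are the natural numbers 1..k. *)
From Stdlib Require Import ClassicalEpsilon.
From mathcomp Require Import all_boot.
Set Implicit Arguments. Unset Strict Implicit. Unset Printing Implicit Defensive.

Definition simple_graph (T : finType) (e : rel T) : Prop :=
  symmetric e /\ irreflexive e.

Section Defs.
Variables (T : finType) (e : rel T).

Definition proper_col_on (S : {set T}) (k : nat) (c : T -> nat) : Prop :=
  (forall x, x \in S -> 1 <= c x <= k) /\
  (forall x y, x \in S -> y \in S -> e x y -> c x != c y).

Definition proper_kcol (S : {set T}) (k : nat) (c : T -> nat) : Prop :=
  proper_col_on S k c /\
  (forall i, 1 <= i <= k -> exists2 x, x \in S & c x = i).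

Definition b_vertex (S : {set T}) (k : nat) (c : T -> nat) (v : T) : Prop :=
  v \in S /\
  (forall j, 1 <= j <= k -> j != c v -> exists2 u, u \in S & e v u /\ c u = j).

Definition b_kcol (S : {set T}) (k : nat) (c : T -> nat) : Prop :=
  proper_kcol S k c /\
  (forall i, 1 <= i <= k -> exists v, b_vertex S k c v /\ c v = i).

Definition has_b_kcol (S : {set T}) (k : nat) : Prop :=
  exists c, b_kcol S k c.

Definition has_b_kcolb (S : {set T}) (k : nat) : bool :=
  if excluded_middle_informative (has_b_kcol S k) then true else false.

(* phi(G[S]) : the largest k with a b-k-colouring (necessarily k <= #|S| <= #|T|) *)
Definition bchrom (S : {set T}) : nat :=
  \max_(k < #|T|.+1 | has_b_kcolb S k) k.

Definition bchrom_r (S : {set T}) : nat :=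
  \max_(S' : {set T} | S' \subset S) bchrom S'.

(* G[S] is a b-t-atom: classes D_i = {x in S | d x = i}, i = 1..t,
   special vertices sp i in D_i *)
Definition b_atom (S : {set T}) (t : nat) : Prop :=
  exists (d : T -> nat) (sp : nat -> T),
    (forall x, x \in S -> 1 <= d x <= t) /\
    (forall i, 1 <= i <= t -> sp i \in S /\ d (sp i) = i) /\
    (forall x y, x \in S -> y \in S -> e x y -> d x != d y) /\
    (forall i, 1 <= i <= t -> #|[set x in S | d x == i]| <= t) /\
    (forall i j, 1 <= i <= t -> 1 <= j <= t -> i != j ->
        exists2 u, u \in S & d u = j /\ e (sp i) u).

Definition minimal_b_atom (S : {set T}) (t : nat) : Prop :=
  b_atom S t /\ (forall S' : {set T}, S' \proper S -> ~ b_atom S' t).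

Definition nbhd (S : {set T}) : {set T} :=
  [set x | (x \notin S) && [exists y in S, e x y]].

Definition feasible (S : {set T}) (t : nat) : Prop :=
  exists c, b_kcol S t c /\
    exists c', (forall x, x \in S -> c' x = c x) /\ proper_col_on (S :|: nbhd S) t c'.

End Defs.

(* Main.v *)
Require Import Defs.
From mathcomp Require Import all_boot.
From Stdlib Require Import ClassicalEpsilon Classical.
Set Implicit Arguments. Unset Strict Implicit. Unset Printing Implicit Defensive.

Definition chooseor (A : Type) (x0 : A) (P : A -> Prop) : A :=
  match excluded_middle_informative (exists x, P x) with
  | left H => proj1_sig (constructive_indefinite_description P H)
  | right _ => x0 end.

Lemma chooseorP A x0 (P : A -> Prop) : (exists x, P x) -> P (chooseor x0 P).
Proof.
move=> H; rewrite /chooseor; case: excluded_middle_informative => // H'.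
exact: proj2_sig (constructive_indefinite_description P H').
Qed.

Section Proofs.
Variables (T : finType) (e : rel T).

Lemma has_bP S k : has_b_kcolb e S k = true <-> has_b_kcol e S k.
Proof. by rewrite /has_b_kcolb; case: excluded_middle_informative. Qed.

Lemma b_bound S k : has_b_kcol e S k -> k <= #|T|.
Proof.
case=> c [[_ surj] _].
case: k surj => [|k] surj; first done.
have [x0 _ _] := surj 1 isT.
pose g (i : 'I_k.+1) := chooseor x0 (fun x => x \in S /\ c x = i.+1).
have gP (i : 'I_k.+1) : g i \in S /\ c (g i) = i.+1.
  apply: (@chooseorP _ x0 (fun x => x \in S /\ c x = i.+1)); have [x ? ?] := surj i.+1 (ltn_ord i); by exists x.
have inj : injective g.
  move=> i j H; apply/val_inj; have := (gP i).2; rewrite H (gP j).2; by case.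
by have := @leq_card _ _ g inj; rewrite card_ord.
Qed.

Lemma ge_bchrom S k : has_b_kcol e S k -> k <= bchrom e S.
Proof.
move=> H; have hk : k < #|T|.+1 by rewrite ltnS; apply: b_bound H.
apply: (@leq_bigmax_cond _ (fun i : 'I_#|T|.+1 => has_b_kcolb e S i)
   (fun i => nat_of_ord i) (Ordinal hk)).
by apply/has_bP.
Qed.

Lemma bchrom_att S : 0 < bchrom e S -> has_b_kcol e S (bchrom e S).
Proof.
rewrite /bchrom => pos.
case: (pickP (fun i : 'I_#|T|.+1 => has_b_kcolb e S i)) => [i0 Pi0 | none].
  rewrite (bigmax_eq_arg _ Pi0); case: arg_maxnP => // j Pj _.
  by apply/has_bP.
move: pos; have -> : \max_(k < #|T|.+1 | has_b_kcolb e S k) (k : nat) = 0.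
  by apply/eqP; rewrite -leqn0; apply/bigmax_leqP => i; rewrite none.
done.
Qed.

Lemma bchrom_le_r S : bchrom e S <= bchrom_r e [set: T].
Proof.
exact: (@leq_bigmax_cond _ (fun S' : {set T} => S' \subset [set: T])
          (bchrom e) S (subsetT S)).
Qed.

Lemma bchrom_r_att : exists S, bchrom e S = bchrom_r e [set: T].
Proof.
rewrite /bchrom_r (bigmax_eq_arg _ (subsetT [set: T])); by eexists.
Qed.


Lemma atom_exists S t c : 0 < t -> b_kcol e S t c -> exists A, b_atom e A t.
Proof.
move=> tpos [[[cr cp] surj] bv].
have [x0 _ _] := surj 1 (tpos : 0 < 1 <= t).
pose sp n := chooseor x0 (fun v => b_vertex e S t c v /\ c v = n).
have spP n : 0 < n <= t -> b_vertex e S t c (sp n) /\ c (sp n) = n.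
  by move=> h; apply: (@chooseorP _ x0 (fun v => b_vertex e S t c v /\ c v = n)); apply: bv.
pose w n m := if n == m then sp n
  else chooseor x0 (fun u => u \in S /\ e (sp n) u /\ c u = m).
have wP n m : 0 < n <= t -> 0 < m <= t ->
    [/\ w n m \in S, c (w n m) = m & (n != m -> e (sp n) (w n m))].
  move=> hn hm; rewrite /w; case: eqP => [<-|/eqP nm].
    by have [[Hs _] Hc] := spP n hn; split.
  have [[_ bvn] cn] := spP n hn.
  have [u uS [eu cu]] : exists2 u, u \in S & e (sp n) u /\ c u = m.
    by apply: bvn => //; rewrite cn eq_sym.
  have := @chooseorP _ x0 (fun u => u \in S /\ e (sp n) u /\ c u = m).
  case; first by exists u.
  by move=> ? [? ?]; split.
pose S1 := [set w i.+1 j.+1 | i : 'I_t, j : 'I_t].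
have rng (i : 'I_t) : 0 < i.+1 <= t by rewrite /= ltn_ord.
have S1S x : x \in S1 -> x \in S /\ 0 < c x <= t.
  by case/imset2P => i j _ _ ->; have [? -> _] := wP _ _ (rng i) (rng j).
exists S1, c, sp; split; [|split; [|split; [|split]]].
- by move=> x /S1S [].
- move=> n hn.
  have hk : n.-1 < t by case: n hn => // n /= hn.
  split; last exact: (spP _ hn).2.
  apply/imset2P; exists (Ordinal hk) (Ordinal hk) => //=.
  move: hk; case: n hn => // n _ _ /=.
  by rewrite /w eqxx.
- by move=> x y /S1S [xS _] /S1S [yS _]; apply: cp.
- move=> n hn.
  apply: (@leq_trans #|[set w i.+1 n | i : 'I_t]|); last first.
    by apply: (leq_trans (leq_imset_card _ _)); rewrite card_ord.
  apply: subset_leq_card; apply/subsetP => x; rewrite inE => /andP [].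
  case/imset2P => i j _ _ -> /eqP.
  have [_ -> _] := wP _ _ (rng i) (rng j) => eqj.
  apply/imsetP; exists i => //; by rewrite eqj.
- move=> n m hn hm nm.
  have hk : n.-1 < t by case: n hn nm => // n /= hn.
  have hl : m.-1 < t by case: m hm nm => // m /= hm; rewrite andbT.
  have [wS wc we] := wP _ _ hn hm.
  exists (w n m); last by split => //; apply: we.
  apply/imset2P; exists (Ordinal hk) (Ordinal hl) => //=.
  by case: n hn {hk wS wc we nm} => // n _; case: m hm {hl} => // m _.
Qed.

Lemma min_atom t : forall n (S : {set T}), #|S| <= n -> b_atom e S t ->
  exists A, minimal_b_atom e A t.
Proof.
elim=> [|n IH] S hS hA.
  exists S; split => // S' /proper_card; by rewrite ltnNge (leq_trans hS).
case: (classic (exists S' : {set T}, S' \proper S /\ b_atom e S' t)) => [[S' [pr at']]|H].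
  by apply: (IH S') => //; rewrite -ltnS (leq_trans (proper_card pr)).
by exists S; split => // S' pr at'; apply: H; exists S'.
Qed.


Section Recolor.
Hypotheses (sym : symmetric e) (irr : irreflexive e).
Variables (t : nat) (A : {set T}) (cA c' : T -> nat).
Hypotheses (bcA : b_kcol e A t cA) (ext : forall x, x \in A -> c' x = cA x)
  (pc' : proper_col_on e (A :|: nbhd e A) t c')
  (Hmax : forall S, ~ has_b_kcol e S t.+1).

Definition good (f : T -> nat) :=
  [/\ forall x, 0 < f x, forall x y, e x y -> f x != f y,
      forall x, x \in A -> f x = cA x & forall x, x \in nbhd e A -> f x <= t].

Definition Xs (f : T -> nat) := [set x | t < f x].

Lemma cA_rng x : x \in A -> 0 < cA x <= t.
Proof. by case: bcA => [[[h _] _] _]; apply: h. Qed.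

Lemma no_b_t1 f x : good f -> t < f x ->
  (forall i, 0 < i <= t -> exists u, [/\ e x u, f u = i &
     forall j, 0 < j <= t -> j != i -> exists w, e u w /\ f w = j]) -> False.
Proof.
move=> [g1 g2 g3 g4] fx key.
pose S := [set y | (y == x) || (f y <= t)].
pose d y := if y == x then t.+1 else f y.
apply: (Hmax (S := S)); exists d.
have inS y : y \in S -> y != x -> f y <= t.
  by rewrite inE => /orP [/eqP -> | //]; rewrite eqxx.
have Sx : x \in S by rewrite inE eqxx.
have fS y : f y <= t -> y \in S by move=> h; rewrite inE h orbT.
have nex y : f y <= t -> (y == x) = false.
  by move=> h; apply/eqP => yx; move: h; rewrite yx leqNgt fx.
split; [split; [split|]|].
- move=> y yS; rewrite /d; case: eqP => [_|/eqP yx]; first by rewrite leqnn.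
  by rewrite g1 /= (leq_trans (inS y yS yx)).

- move=> y z yS zS eyz; rewrite /d.
  case: (y =P x) => [yx|/eqP yx]; case: (z =P x) => [zx|/eqP zx].
  + by move: eyz; rewrite yx zx irr.
  + by rewrite eq_sym neq_ltn ltnS (inS z zS zx).
  + by rewrite neq_ltn ltnS (inS y yS yx).
  + exact: g2.
- move=> i /andP [i0 hi]; case: (i =P t.+1) => [->|/eqP it].
    by exists x => //; rewrite /d eqxx.
  have hi' : 0 < i <= t by rewrite i0 /= -ltnS ltn_neqAle it hi.
  case: bcA => [[_ surj] _]; have [y yA cy] := surj i hi'.
  have fy : f y = i by rewrite g3.
  have fyt : f y <= t by rewrite fy; case/andP: hi'.
  by exists y; [apply: fS | rewrite /d nex].
- move=> i /andP [i0 hi]; case: (i =P t.+1) => [->|/eqP it].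
    exists x; split; last by rewrite /d eqxx.
    split => // j /andP [j0 hj]; rewrite /d eqxx => jt.
    have hj' : 0 < j <= t by rewrite j0 /= -ltnS ltn_neqAle jt hj.
    have [u [xu fu _]] := key j hj'.
    have fut : f u <= t by rewrite fu; case/andP: hj'.
    by exists u; [apply: fS | split => //; rewrite /d nex].
  have hi' : 0 < i <= t by rewrite i0 /= -ltnS ltn_neqAle it hi.
  have [u [xu fu hu]] := key i hi'.
  have fut : f u <= t by rewrite fu; case/andP: hi'.
  exists u; split; last by rewrite /d nex.
  split; first exact: fS.
  move=> j /andP [j0 hj]; rewrite /d nex // fu => ji.
  case: (j =P t.+1) => [->|/eqP jt].
    by exists x => //; split; [rewrite sym | rewrite eqxx].
  have hj' : 0 < j <= t by rewrite j0 /= -ltnS ltn_neqAle jt hj.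
  have [w [uw fw]] := hu j hj' ji.
  have fwt : f w <= t by rewrite fw; case/andP: hj'.
  by exists w; [apply: fS | split => //; rewrite nex].
Qed.

Lemma xA_out f x : good f -> t < f x -> x \notin A /\ (forall y, y \in A -> ~~ e x y).
Proof.
move=> [g1 g2 g3 g4] fx.
have xA : x \notin A.
  apply/negP => xA; move: fx; rewrite g3 // ltnNge.
  by case/andP: (cA_rng xA) => _ ->.
split => // y yA; apply/negP => exy.
have : x \in nbhd e A by rewrite inE xA /=; apply/existsP; exists y; rewrite yA exy.
by move/g4; rewrite leqNgt fx.
Qed.

Lemma step f x i : good f -> t < f x -> 0 < i <= t ->
  ~ (exists u, [/\ e x u, f u = i &
     forall j, 0 < j <= t -> j != i -> exists w, e u w /\ f w = j]) ->
  exists g, good g /\ #|Xs g| < #|Xs f|.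
Proof.
move=> gf fx hi Hn.
have [xA xnA] := xA_out gf fx.
case: gf => [g1 g2 g3 g4].
have ex u : e x u -> f u = i ->
   exists j, (0 < j <= t /\ j != i) /\ forall w, e u w -> f w != j.
  move=> xu fu; apply: NNPP => H2; apply: Hn; exists u; split => //.
  move=> j hj ji; apply: NNPP => H3; apply: H2; exists j; split => //.
  by move=> w uw; apply/eqP => fw; apply: H3; exists w.
pose P u j := (0 < j <= t /\ j != i) /\ forall w, e u w -> f w != j.
pose jf u := chooseor 1 (P u).
have jfP u : e x u -> f u = i -> P u (jf u).
  by move=> xu fu; apply: (@chooseorP _ 1 (P u)); apply: ex.
pose g y := if y == x then i else if e x y && (f y == i) then jf y else f y.
exists g; split.
  split.
  - move=> y; rewrite /g; case: eqP => _; first by case/andP: hi.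
    case: ifP => // /andP [xy /eqP fy].
    by have [[/andP [] ? _ _] _] := jfP y xy fy.
  - move=> y z yz; rewrite /g.
    case: (y =P x) => [yx|/eqP yx]; case: (z =P x) => [zx|/eqP zx].
    + by move: yz; rewrite yx zx irr.
    + move: yz; rewrite yx => xz; rewrite xz /=.
      case: (f z =P i) => [fz|/eqP fz]; last by rewrite eq_sym.
      by have [[_ ?] _] := jfP z xz fz; rewrite eq_sym.
    + move: yz; rewrite zx sym => xy; rewrite xy /=.
      case: (f y =P i) => [fy|/eqP fy] //.
      by have [[_ ?] _] := jfP y xy fy.
    + case: ifP => [/andP [xy /eqP fy]|hy]; case: ifP => [/andP [xz /eqP fz]|hz].
      * by move: (g2 _ _ yz); rewrite fy fz eqxx.
      * by have [_ h] := jfP y xy fy; rewrite eq_sym; apply: h.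
      * by have [_ h] := jfP z xz fz; apply: h; rewrite sym.
      * exact: g2.
  - move=> y yA; rewrite /g; have -> : (y == x) = false.
      by apply/eqP => yx; move: xA; rewrite -yx yA.
    by rewrite (negbTE (xnA y yA)) /= g3.
  - move=> y yN; rewrite /g; case: eqP => _; first by case/andP: hi.
    case: ifP => [/andP [xy /eqP fy]|_]; last exact: g4.
    by have [[/andP [] _ ? _] _] := jfP y xy fy.
apply: proper_card; apply/properP; split.
  apply/subsetP => y; rewrite !inE /g; case: eqP => _.
    by rewrite ltnNge; case/andP: hi => _ ->.
  case: ifP => // /andP [xy /eqP fy].
  by have [[/andP [] _ h _] _] := jfP y xy fy; rewrite ltnNge h.
exists x; rewrite !inE // /g eqxx ltnNge; by case/andP: hi => _ ->.
Qed.

Lemma done_col f : good f -> (forall x, t < f x = false) -> has_b_kcol e [set: T] t.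
Proof.
move=> [g1 g2 g3 g4] none; exists f.
case: bcA => [[[_ _] surj] bv].
split; [split; [split|]|].
- by move=> x _; rewrite g1 /= leqNgt none.
- by move=> x y _ _; apply: g2.
- by move=> i hi; have [x xA cx] := surj i hi; exists x => //; rewrite g3.
- move=> i hi; have [v [[vA bvv] cv]] := bv i hi.
  exists v; split; last by rewrite g3.
  split => // j hj; rewrite g3 // => jv.
  have [u uA [vu cu]] := bvv j hj jv.
  by exists u => //; rewrite g3.
Qed.

Lemma recolor_ind n : forall f, good f -> #|Xs f| <= n -> has_b_kcol e [set: T] t.
Proof.
elim: n => [|n IH] f gf hX.
  apply: (done_col gf) => x; apply/negbTE/negP => fx.
  by move: hX; rewrite leqn0 => /eqP/cards0_eq/setP/(_ x); rewrite !inE fx.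
case: (pickP (fun x => t < f x)) => [x fx|none]; last exact: done_col gf none.
case: (classic (forall i, 0 < i <= t -> exists u, [/\ e x u, f u = i &
     forall j, 0 < j <= t -> j != i -> exists w, e u w /\ f w = j])) => [key|H].
  by case: (no_b_t1 gf fx key).
have [i Hi] := not_all_ex_not _ _ H.
have [hi Hn] := imply_to_and _ _ Hi.
have [g [gg lt]] := step gf fx hi Hn.
by apply: (IH g gg); rewrite -ltnS (leq_trans lt hX).
Qed.

Lemma recolor : has_b_kcol e [set: T] t.
Proof.
pose f0 y := if y \in A :|: nbhd e A then c' y else t + 1 + enum_rank y.
case: pc' => rng pr.
apply: (@recolor_ind #|Xs f0| f0) => //; split.
- move=> y; rewrite /f0; case: ifP => [/rng /andP [] //|_].
  by rewrite addn1.
- move=> y z yz; rewrite /f0.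
  case: ifP => [yU|yU]; case: ifP => [zU|zU].
  + exact: pr.
  + by rewrite neq_ltn (leq_trans _ (leq_addr _ _)) // addn1 ltnS; case/andP: (rng y yU).
  + by rewrite neq_ltn orbC (leq_trans _ (leq_addr _ _)) // addn1 ltnS; case/andP: (rng z zU).
  + rewrite eqn_add2l; apply/negP => /eqP /val_inj /enum_rank_inj yzE.
    by move: yz; rewrite yzE irr.
- by move=> y yA; rewrite /f0 inE yA /= ext.
- move=> y yN; rewrite /f0 inE yN orbT.
  have yU : y \in A :|: nbhd e A by rewrite inE yN orbT.
  by case/andP: (rng y yU).
Qed.

End Recolor.
End Proofs.

Theorem mainTheorem9 (T : finType) (e : rel T) :
  simple_graph e ->
  let t := bchrom_r e [set: T] in
  (forall S : {set T}, minimal_b_atom e S t -> feasible e S t) ->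
  bchrom e [set: T] = bchrom_r e [set: T].
Proof.
move=> [sym irr] t Hfeas.
have tdef : t = bchrom_r e [set: T] by [].
clearbody t; rewrite -tdef.
apply/eqP; rewrite eqn_leq (tdef) bchrom_le_r /= -tdef.
have [S0 eS0] := bchrom_r_att e.
rewrite -tdef in eS0.
case: (posnP t) => [-> //|tpos].
have hS0 : has_b_kcol e S0 t by rewrite -eS0; apply: bchrom_att; rewrite eS0.
case: hS0 => c bc.
have [A0 atA0] := atom_exists tpos bc.
have [A minA] := min_atom (leqnn #|A0|) atA0.
have [cA [bcA [c' [ext pc']]]] := Hfeas A minA.
apply: ge_bchrom; apply: (recolor sym irr bcA ext pc').
move=> S H; have := ge_bchrom H; have := bchrom_le_r e S; rewrite -tdef.
by move=> a b; have := leq_trans b a; rewrite ltnn.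
Qed.
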